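(* Let $G$ be a game over a graph $\Gamma=(V,E)$, let $(U,W)$ be a cut of $\Gamma$, and let $A\subseteq U$, $B\subseteq V$, $C\subseteq W$. If $G\vDash A\cup B\rhd C$, then $G\vDash {\cal B}(U)\cup{\cal B}(W)\cup B\rhd C$.
   Context: Graphs are finite, undirected, with no loops or multiple edges; $Adj^+(v)$ is $v$ together with its neighbours. A cut $(U,W)$ is a partition $V=U\sqcup W$. The border of $U\subseteq V$ is ${\cal B}(U)=\{v\in U\mid (v,w)\in E\text{ for some }w\in V\setminus U\}$. A game over $\Gamma$ is a strategic game with player set $V$, finite strategy sets $S_v$, and pay-off functions $u_v$ depending only on the strategies of players in $Adj^+(v)$. $NE(G)$ is its set of pure Nash equilibria. For profiles $\mathbf s,\mathbf t$ and $X\subseteq V$, $\mathbf s=_X\mathbf t$ means they agree on every player of $X$. $G\vDash A\rhd B$ means: for all $\mathbf s,\mathbf t\in NE(G)$, $\mathbf s=_A\mathbf t$ implies $\mathbf s=_B\mathbf t$. *)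

(* Defs.v *)
From mathcomp Require Import all_boot all_order all_algebra.
Set Implicit Arguments. Unset Strict Implicit. Unset Printing Implicit Defensive.
Import Order.TTheory GRing.Theory Num.Theory.
Local Open Scope ring_scope.

Section Defs.
Variables (V : finType) (S : V -> finType).

Definition profile := forall v : V, S v.

Definition adjp (e : rel V) (v : V) : {set V} := [set w | (w == v) || e v w].

Definition border (e : rel V) (U : {set V}) : {set V} :=
  [set v in U | [exists w, (w \notin U) && e v w]].

Variable R : realDomainType.

Definition local_payoffs (e : rel V) (u : V -> profile -> R) : Prop :=
  forall (v : V) (s t : profile),
    (forall w, w \in adjp e v -> s w = t w) -> u v s = u v t.

Definition is_NE (u : V -> profile -> R) (s : profile) : Prop :=
  forall (v : V) (t : profile),
    (forall w, w != v -> t w = s w) -> u v t <= u v s.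

Definition agree_on (X : {set V}) (s t : profile) : Prop :=
  forall v, v \in X -> s v = t v.

Definition entails (u : V -> profile -> R) (X Y : {set V}) : Prop :=
  forall s t : profile, is_NE u s -> is_NE u t -> agree_on X s t -> agree_on Y s t.

End Defs.

(* Main.v *)
Require Import Defs.
From mathcomp Require Import all_boot all_order all_algebra.
Import Order.TTheory GRing.Theory Num.Theory.
Local Open Scope ring_scope.

Lemma ne_local (V : finType) (e : rel V) (S : V -> finType) (R : realDomainType)
  (u : V -> profile S -> R) (u_loc : local_payoffs e u) (s r : profile S) (v : V) :
  is_NE u s -> (forall w, w \in adjp e v -> r w = s w) ->
  forall t', (forall w, w != v -> t' w = r w) -> u v t' <= u v r.
Proof.
move=> Hs Hr t' Ht'.
pose t'' : profile S := fun w => if w == v then t' w else s w.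
have -> : u v t' = u v t''.
  apply: u_loc => w Hw; rewrite /t''; case: eqP => // /eqP ne.
  by rewrite Ht' // Hr.
have -> : u v r = u v s by apply: u_loc.
apply: Hs => w; rewrite /t''; by case: eqP.
Qed.

Theorem lemma4 (V : finType) (e : rel V) (e_sym : symmetric e) (e_irr : irreflexive e)
  (S : V -> finType) (R : realDomainType) (u : V -> profile S -> R)
  (u_loc : local_payoffs e u)
  (U A B C : {set V}) (hA : A \subset U) (hC : C \subset ~: U) :
  entails u (A :|: B) C ->
  entails u (border e U :|: border e (~: U) :|: B) C.
Proof.
move=> H s t Hs Ht Hag.
pose r : profile S := fun w => if w \in U then s w else t w.
have agB : forall w, w \in border e U -> s w = t w.
  by move=> w Hw; apply: Hag; rewrite in_setU in_setU Hw.
have agW : forall w, w \in border e (~: U) -> s w = t w.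
  by move=> w Hw; apply: Hag; rewrite in_setU in_setU Hw orbT.
have Hr : is_NE u r.
  move=> v t' Ht'; case Hv: (v \in U).
  - apply: (@ne_local V e S R u u_loc s r v Hs _ t' Ht') => w; rewrite inE => /orP Hw.
    rewrite /r; case Hw': (w \in U) => //.
    case: Hw => [/eqP Ew|Evw]; first by rewrite Ew Hv in Hw'.
    symmetry; apply: agW; rewrite inE in_setC Hw' /=.
    apply/existsP; exists v; by rewrite in_setC Hv /= e_sym.
  - apply: (@ne_local V e S R u u_loc t r v Ht _ t' Ht') => w; rewrite inE => /orP Hw.
    rewrite /r; case Hw': (w \in U) => //.
    case: Hw => [/eqP Ew|Evw]; first by rewrite Ew Hv in Hw'.
    apply: agB; rewrite inE Hw' /=.
    apply/existsP; exists v; by rewrite Hv /= e_sym.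
have Hrs : agree_on (A :|: B) s r.
  move=> w; rewrite inE => /orP [Hw|Hw]; rewrite /r.
    by rewrite (subsetP hA _ Hw).
  case: (w \in U) => //; apply: Hag; by rewrite inE Hw orbT.
move=> w Hw; have := H s r Hs Hr Hrs w Hw.
have := subsetP hC _ Hw; rewrite in_setC /r => /negbTE -> //.
Qed.
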